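(* Let $\mathbb{K}$ be a field and $f=a_0(x)+a_1(x)y+\cdots+a_n(x)y^n\in\mathbb{K}[x,y]$ with $n\geq 2$, $a_0,\ldots,a_{n-1}\in\mathbb{K}[x]$, $a_n\in\mathbb{K}$, $a_0a_n\neq 0$, and suppose there exists an index $j$ with $0\leq j\leq n-1$ such that $\deg a_j>\max_{i\neq j}\deg a_i$. Then $f$ is a product of at most $n-j$ irreducible polynomials over $\mathbb{K}[x]$. In particular, if $j=n-1$, then $f$ is irreducible over $\mathbb{K}[x]$.
   Context: $f$ is regarded as a polynomial in $y$ with coefficients in $\mathbb{K}[x]$; ''a product of at most $k$ irreducible polynomials over $\mathbb{K}[x]$'' means that in the factorization of $f$ into irreducible elements of $\mathbb{K}[x][y]$ the number of factors, counted with multiplicities, is at most $k$. *)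

(* Defs.v *)
From HB Require Import structures.
From mathcomp Require Import all_boot all_order all_algebra.
Set Implicit Arguments. Unset Strict Implicit. Unset Printing Implicit Defensive.
Import GRing.Theory.
Local Open Scope ring_scope.

Definition irreducible_elt (R : idomainType) (p : R) : Prop :=
  [/\ p != 0, p \isn't a GRing.unit &
      forall a b : R, p = a * b -> a \is a GRing.unit \/ b \is a GRing.unit].

Definition prod_at_most_irr (R : idomainType) (k : nat) (p : R) : Prop :=
  exists (u : R) (s : seq R),
    [/\ u \is a GRing.unit, (size s <= k)%N,
        (forall g, g \in s -> irreducible_elt g) &
        p = u * \prod_(g <- s) g].

(* Main.v *)
Require Import Defs.
From HB Require Import structures.
From mathcomp Require Import all_boot all_order all_algebra.
From mathcomp Require Import zify.
From Stdlib Require Import Classical.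
Import GRing.Theory.
Local Open Scope ring_scope.

Section S.
Variable K : fieldType.
Implicit Types p g u : {poly {poly K}}.

Lemma nonunit_size2 p : p != 0 -> lead_coef p \is a GRing.unit ->
  p \isn't a GRing.unit -> (2 <= size p)%N.
Proof.
move=> p0 lu nu; rewrite ltnNge; apply/negP => hs.
have s1 : size p = 1%N.
  by apply/eqP; rewrite eqn_leq hs lt0n size_poly_eq0.
by move/negP: nu; apply; rewrite poly_unitE s1 eqxx /= -(@lead_coefC _ p`_0) -size1_polyC // s1.
Qed.

Lemma L_coef p i : (lead_coef (swapXY p))`_i = p`_i`_((size (swapXY p)).-1).
Proof. by rewrite lead_coefE coef_swapXY. Qed.

Lemma size_L p : (size (lead_coef (swapXY p)) <= size p)%N.
Proof.
apply/leq_sizeP => i hi; by rewrite L_coef (nth_default _ hi) coef0.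
Qed.


Lemma Lf_eq n (f : {poly {poly K}}) (j : nat) :
  size f = n.+1 ->
  (forall i : nat, leq i n -> i != j -> leq (size f`_i).+1 (size f`_j)) ->
  (j <= n)%N -> leq 1 (size f`_j) ->
  lead_coef (swapXY f) = lead_coef f`_j *: 'X^j.
Proof.
move=> sf hj jn sj1.
have hD : size (swapXY f) = size f`_j.
  rewrite -sizeYE; apply/eqP; rewrite eqn_leq max_size_coefXY andbT.
  apply/bigmax_leqP => /= i _.
  have [->|ij] := eqVneq (val i) j; first by [].
  have lin : (i <= n)%N by have := ltn_ord i; rewrite {2}sf ltnS.
  by apply: ltnW; apply: hj.
apply/polyP => i; rewrite L_coef hD coefZ coefXn.
have [->|ij] := eqVneq i j; first by rewrite mulr1 lead_coefE.
rewrite mulr0.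
have [lin|nin] := leqP i n.
  apply: nth_default; have := hj i lin ij.
  by move=> h; rewrite -ltnS prednK // (leq_ltn_trans _ h).
by rewrite (nth_default _ (_ : size f <= i)%N) ?coef0 // sf.
Qed.

Local Notation L p := (lead_coef (swapXY p)).

Lemma Lnz p : p != 0 -> L p != 0.
Proof. by rewrite lead_coef_eq0 swapXY_eq0. Qed.

Lemma bound n (f : {poly {poly K}}) (j : nat) u (s : seq {poly {poly K}}) :
  leq 2 n ->
  size f = n.+1 ->
  leq (size f`_n) 1 ->
  f`_0 * f`_n != 0 ->
  leq j n.-1 ->
  (forall i : nat, leq i n -> i != j -> leq (size f`_i).+1 (size f`_j)) ->
  u \is a GRing.unit -> (forall g, g \in s -> g \isn't a GRing.unit) ->
  f = u * \prod_(g <- s) g ->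
  (size s <= n - j)%N.
Proof.
move=> n2 sf sfn h0n jn hj uu nus fE.
have f0 : f != 0 by rewrite -size_poly_eq0 sf.
have a0 : f`_0 != 0 by move: h0n; rewrite mulf_eq0 negb_or => /andP[].
have an : f`_n != 0 by move: h0n; rewrite mulf_eq0 negb_or => /andP[].
have lcu : lead_coef f \is a GRing.unit.
  rewrite lead_coefE sf /= (size1_polyC sfn) poly_unitE size_polyC coefC /= unitfE.
  have -> : f`_n`_0 != 0 by apply: contra an => /eqP e; rewrite (size1_polyC sfn) e.
  by [].
have su : size u = 1%N by move: uu; rewrite poly_unitE => /andP[/eqP].
have hg : forall g, g \in s ->
    [/\ g != 0, lead_coef g \is a GRing.unit, (2 <= size g)%N & g`_0 != 0].
  move=> g gs.
  have E : \prod_(h <- s) h = g * \prod_(h <- rem g s) h by rewrite (big_rem _ gs).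
  have g0 : g != 0 by apply: contra f0 => /eqP g0; rewrite fE E g0 mul0r mulr0.
  have lg : lead_coef g \is a GRing.unit.
    by move: lcu; rewrite fE E !lead_coefM !unitrM => /andP[_ /andP[]].
  split => //; first exact: nonunit_size2 (nus g gs).
  by apply: contra a0 => /eqP e; rewrite fE E !coef0M e mul0r mulr0.
have P0 : \prod_(g <- s) g != 0 by apply: contra f0 => /eqP e; rewrite fE e mulr0.
have ns : n.+1 = ((\sum_(g <- s) size g).+1 - size s)%N.
  rewrite -sf fE size_mul -?size_poly_eq0 ?su //; last by rewrite size_poly_eq0.
  by rewrite add1n /= size_prod_seq // => g /hg[].
have nj : n != j by apply/eqP => e; move: jn n2; rewrite e; clear; lia.
have sj : leq 1 (size f`_j) by have := hj n (leqnn n) nj; clear; lia.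
have LfX := @Lf_eq n f j sf hj (leq_trans jn (leq_pred n)) sj.
have c0 : lead_coef f`_j != 0.
  by rewrite lead_coef_eq0 -size_poly_eq0 -lt0n.
have LfE : L f = L u * \prod_(g <- s) L g.
  by rewrite fE rmorphM rmorph_prod /= lead_coefM lead_coef_prod.
have sLf : size (L f) = j.+1 by rewrite LfX size_scale // size_polyXn.
have u0 : u != 0 by rewrite -size_poly_eq0 su.
have sLu : size (L u) = 1%N.
  have := size_L u; have := Lnz u u0; rewrite -size_poly_eq0 su; clear; lia.
have sLprod : j.+1 = ((\sum_(g <- s) size (L g)).+1 - size s)%N.
  rewrite -sLf LfE size_mul ?Lnz // ?sLu ?add1n /=; last first.
    by rewrite prodf_seq_neq0; apply/allP => g /hg[g0 _ _ _]; rewrite Lnz.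
  by rewrite size_prod_seq // => g /hg[g0 _ _ _]; rewrite Lnz.
have strict : forall g, g \in s -> (size (L g) < size g)%N.
  move=> g gs; rewrite ltn_neqAle size_L andbT; apply/negP => /eqP e.
  have [g0 lg sg ga0] := hg g gs.
  have hl : (L g)`_(size g).-1 != 0 by rewrite -e -lead_coefE lead_coef_eq0 Lnz.
  rewrite L_coef -lead_coefE in hl.
  have slg : size (lead_coef g) = 1%N by move: lg; rewrite poly_unitE => /andP[/eqP].
  have D1 : (size (swapXY g)).-1 = 0%N.
    apply/eqP; apply: contraR hl => hD; apply/eqP; apply: nth_default; by rewrite slg lt0n.
  have gk : forall i k, (0 < k)%N -> g`_i`_k = 0.
    move=> i k k0; rewrite -coef_swapXY (nth_default 0 (_ : size (swapXY g) <= k)%N) ?coef0 //.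
    by move: D1 k0; case: (size (swapXY g)) => [|[|m]].
  have g00 : g`_0`_0 != 0.
    apply: contra ga0 => /eqP h; apply/eqP/polyP => k; rewrite coef0.
    by case: k => [|k] //; apply: gk.
  have nr : ~~ root (L g) 0 by rewrite rootE horner_coef0 L_coef D1.
  have cop : coprimep (L g) ('X^j) by apply: coprimep_expr; rewrite coprimepX.
  have dv : L g %| (lead_coef f`_j)%:P * 'X^j.
    by rewrite mul_polyC -LfX LfE (big_rem _ gs) /= mulrCA dvdp_mulIl.
  rewrite Gauss_dvdpl // in dv.
  have := dvdp_leq _ dv; rewrite polyC_eq0 c0 size_polyC c0 => /(_ isT).
  by rewrite e; case: (size g) sg => [|[|m]].
have B : (\sum_(g <- s) size (L g) <= \sum_(g <- s) (size g).-1)%N.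
  rewrite !big_seq; apply: leq_sum => g gs; have := strict g gs; clear; lia.
have C : (size s <= \sum_(g <- s) size (L g))%N.
  rewrite -sum1_size !big_seq; apply: leq_sum => g /hg[g0 _ _ _].
  by rewrite lt0n size_poly_eq0 Lnz.
have A : (\sum_(g <- s) size g = \sum_(g <- s) (size g).-1 + size s)%N.
  rewrite -(sum1_size s) -big_split /= !big_seq; apply: eq_bigr => g /hg[_ _ sg _]; by rewrite addn1 prednK // ltnW.
move: ns sLprod A B C; clear; lia.
Qed.

Lemma exists_fact m (p : {poly {poly K}}) : (size p <= m)%N -> p != 0 ->
  lead_coef p \is a GRing.unit ->
  exists u (s : seq {poly {poly K}}), [/\ u \is a GRing.unit,
    (forall g, g \in s -> irreducible_elt g) & p = u * \prod_(g <- s) g].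
Proof.
elim: m p => [|m IH] p sp p0 lp.
  by move: sp; rewrite leqn0 size_poly_eq0 (negbTE p0).
have [pu|pnu] := boolP (p \is a GRing.unit).
  by exists p, [::]; split => //; rewrite big_nil mulr1.
case: (classic (exists a b, p = a * b /\ a \isn't a GRing.unit /\ b \isn't a GRing.unit))
  => [[a [b [pab [na nb]]]] | nex].
  have a0 : a != 0 by apply: contra p0 => /eqP e; rewrite pab e mul0r.
  have b0 : b != 0 by apply: contra p0 => /eqP e; rewrite pab e mulr0.
  have /andP[la lb] : (lead_coef a \is a GRing.unit) && (lead_coef b \is a GRing.unit).
    by rewrite -unitrM -lead_coefM -pab.
  have sa := nonunit_size2 a a0 la na.
  have sb := nonunit_size2 b b0 lb nb.
  have spab : size p = (size a + size b).-1 by rewrite pab size_mul.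
  have sam : (size a <= m)%N by move: sp; rewrite spab; clear -sa sb; lia.
  have sbm : (size b <= m)%N by move: sp; rewrite spab; clear -sa sb; lia.
  have [ua [sa' [ua1 ia Ea]]] := IH a sam a0 la.
  have [ub [sb' [ub1 ib Eb]]] := IH b sbm b0 lb.
  exists (ua * ub), (sa' ++ sb'); split.
  - by rewrite unitrM ua1 ub1.
  - by move=> g; rewrite mem_cat => /orP[/ia|/ib].
  - by rewrite big_cat /= pab Ea Eb mulrACA.
exists 1, [:: p]; split; first exact: unitr1.
  move=> g; rewrite inE => /eqP ->; split => // a b pab.
  have [au|na] := boolP (a \is a GRing.unit); first by left.
  have [bu|nb] := boolP (b \is a GRing.unit); first by right.
  by exfalso; apply: nex; exists a, b.
by rewrite big_seq1 mul1r.
Qed.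

End S.

Theorem theorem5 (K : fieldType) (n : nat) (f : {poly {poly K}}) (j : nat) :
  leq 2 n ->
  size f = n.+1 ->
  leq (size f`_n) 1 ->
  f`_0 * f`_n != 0 ->
  leq j n.-1 ->
  (forall i : nat, leq i n -> i != j -> leq (size f`_i).+1 (size f`_j)) ->
  prod_at_most_irr (n - j) f /\ (j = n.-1 -> irreducible_elt f).
Proof.
move=> n2 sf sfn h0n jn hj.
have f0 : f != 0 by rewrite -size_poly_eq0 sf.
have an : f`_n != 0 by move: h0n; rewrite mulf_eq0 negb_or => /andP[].
have lcu : lead_coef f \is a GRing.unit.
  rewrite lead_coefE sf /= (size1_polyC sfn) poly_unitE size_polyC coefC /= unitfE.
  have -> : f`_n`_0 != 0 by apply: contra an => /eqP e; rewrite (size1_polyC sfn) e.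
  by [].
split.
  have [u [s [uu irr fE]]] := @exists_fact K (size f) f (leqnn _) f0 lcu.
  exists u, s; split => //.
  apply: (@bound K n f j u s n2 sf sfn h0n jn hj uu) fE.
  by move=> g /irr[].
move=> jE; split => //.
  by rewrite poly_unitE sf eqSS; case: eqP n2 => // ->.
move=> a b fab.
have [au|na] := boolP (a \is a GRing.unit); first by left.
have [bu|nb] := boolP (b \is a GRing.unit); first by right.
exfalso.
have H := @bound K n f j 1 [:: a; b] n2 sf sfn h0n jn hj (unitr1 _).
have : (size [:: a; b] <= n - j)%N.
  apply: H; last by rewrite mul1r big_cons big_seq1.
  by move=> g; rewrite !inE => /orP[/eqP->|/eqP->].
have e1 : (n - n.-1 = 1)%N by clear -n2; lia.
by rewrite jE e1.
Qed.
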